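(* Let $E$ be an arbitrary directed graph satisfying Condition (L), and let $(H,S)$ be a reflexive admissible pair of $E$. Then the quotient graph $E/(H,S)$ satisfies Condition (L).
   Context: A path is a vertex or a finite sequence of edges $e_1\dots e_n$ with $\mathbf{r}(e_i)=\mathbf{s}(e_{i+1})$; $p^0$ is its vertex set. A cycle is a closed path ($\mathbf{s}(p)=\mathbf{r}(p)$) of positive length whose edges have distinct sources; it has an exit if some vertex of it emits an edge not on the cycle. Condition (L): every cycle has an exit. Write $u\ge v$ if there is a path from $u$ to $v$; $R(V)=\{u\mid u\ge v$ for some $v\in V\}$. $H\subseteq E^0$ is hereditary if closed under following paths, saturated if every vertex emitting a nonzero finite number of edges all with ranges in $H$ lies in $H$. $B_H=\{v\in E^0-H\mid v$ emits infinitely many edges and $\mathbf{s}^{-1}(v)\cap\mathbf{r}^{-1}(E^0-H)$ is nonempty and finite$\}$. Admissible pair: $(H,S)$, $H$ hereditary saturated, $S\subseteq B_H$. $H^\bot=E^0-R(H)$, $S^\bot=B_{H^\bot}-S$, $H^{\bot\bot}=E^0-R(H^\bot)$, $S^{\bot\bot}=B_{H^{\bot\bot}}-S^\bot$; $(H,S)$ is reflexive if $(H,S)=(H^{\bot\bot},S^{\bot\bot})$. The quotient graph $E/(H,S)$ has vertices $(E^0-H)\cup\{v'\mid v\in B_H-S\}$ and edges $\{e\in E^1\mid\mathbf{r}(e)\notin H\}\cup\{e'\mid e\in E^1,\ \mathbf{r}(e)\in B_H-S\}$, with $\mathbf{s},\mathbf{r}$ as in $E$ on edges of $E$, and $\mathbf{s}(e')=\mathbf{s}(e)$,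 $\mathbf{r}(e')=\mathbf{r}(e)'$. *)

(* Defs.v *)
From Stdlib Require Import List.
Import ListNotations.
Set Implicit Arguments.

Record Graph := MkGraph {
  vtx : Type;
  edg : Type;
  src : edg -> vtx;
  rng : edg -> vtx }.

Section GraphDefs.
Variable E : Graph.

Fixpoint walk (u : vtx E) (p : list (edg E)) (v : vtx E) : Prop :=
  match p with
  | [] => u = v
  | e :: p' => src E e = u /\ walk (rng E e) p' v
  end.

Definition reaches (u v : vtx E) : Prop := exists p, walk u p v.

Definition is_cycle (c : list (edg E)) : Prop :=
  exists e p, c = e :: p /\ walk (src E e) c (src E e) /\ NoDup (map (src E) c).

Definition has_exit (c : list (edg E)) : Prop :=
  exists f, In (src E f) (map (src E) c) /\ ~ In f c.

Definition condition_L : Prop := forall c, is_cycle c -> has_exit c.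

Definition finite_set (P : edg E -> Prop) : Prop :=
  exists l : list (edg E), forall e, P e -> In e l.

Definition hereditary (H : vtx E -> Prop) : Prop :=
  forall u v, H u -> reaches u v -> H v.

Definition saturated (H : vtx E -> Prop) : Prop :=
  forall v, (exists e, src E e = v) -> finite_set (fun e => src E e = v) ->
    (forall e, src E e = v -> H (rng E e)) -> H v.

Definition breaking (H : vtx E -> Prop) (v : vtx E) : Prop :=
  ~ H v /\ ~ finite_set (fun e => src E e = v) /\
  (exists e, src E e = v /\ ~ H (rng E e)) /\
  finite_set (fun e => src E e = v /\ ~ H (rng E e)).

Definition admissible (H S : vtx E -> Prop) : Prop :=
  hereditary H /\ saturated H /\ (forall v, S v -> breaking H v).

Definition Rset (X : vtx E -> Prop) (u : vtx E) : Prop :=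
  exists v, X v /\ reaches u v.

Definition Hperp (H : vtx E -> Prop) (u : vtx E) : Prop := ~ Rset H u.

Definition Sperp (H S : vtx E -> Prop) (v : vtx E) : Prop :=
  breaking (Hperp H) v /\ ~ S v.

Definition reflexive_pair (H S : vtx E -> Prop) : Prop :=
  (forall v, H v <-> Hperp (Hperp H) v) /\
  (forall v, S v <-> Sperp (Hperp H) (Sperp H S) v).

(* Quotient graph E/(H,S): vertices inl v (v not in H) and inr v = v'
   (v in B_H - S); edges inl e (r(e) not in H) and inr e = e'
   (r(e) in B_H - S). *)
Definition qvert_pred (H S : vtx E -> Prop) (x : vtx E + vtx E) : Prop :=
  match x with
  | inl v => ~ H v
  | inr v => breaking H v /\ ~ S v
  end.

Definition qedge_pred (H S : vtx E -> Prop) (x : edg E + edg E) : Prop :=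
  match x with
  | inl e => ~ H (rng E e)
  | inr e => breaking H (rng E e) /\ ~ S (rng E e)
  end.

Lemma hered_src (H : vtx E -> Prop) (hH : hereditary H) (e : edg E) :
  ~ H (rng E e) -> ~ H (src E e).
Proof.
  intros nr hs; apply nr; apply (hH (src E e)); auto.
  exists [e]; simpl; auto.
Qed.

Definition QV (H S : vtx E -> Prop) : Type := { x | qvert_pred H S x }.
Definition QE (H S : vtx E -> Prop) : Type := { x | qedge_pred H S x }.

Definition q_src (H S : vtx E -> Prop) (hH : hereditary H) (y : QE H S) : QV H S :=
  match y with
  | exist _ x p =>
    match x as x0 return qedge_pred H S x0 -> QV H S with
    | inl e => fun p => exist (qvert_pred H S) (inl (src E e)) (@hered_src H hH e p)
    | inr e => fun p => exist (qvert_pred H S) (inl (src E e))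
                          (@hered_src H hH e (proj1 (proj1 p)))
    end p
  end.

Definition q_rng (H S : vtx E -> Prop) (y : QE H S) : QV H S :=
  match y with
  | exist _ x p =>
    match x as x0 return qedge_pred H S x0 -> QV H S with
    | inl e => fun p => exist (qvert_pred H S) (inl (rng E e)) p
    | inr e => fun p => exist (qvert_pred H S) (inr (rng E e)) p
    end p
  end.

End GraphDefs.

(* The quotient graph is defined for H hereditary (needed so that sources
   of edges of E/(H,S) lie outside H). *)
Definition quotient_graph (E : Graph) (H S : vtx E -> Prop) (hH : @hereditary E H)
  : Graph :=
  @MkGraph (@QV E H S) (@QE E H S) (@q_src E H S hH) (@q_rng E H S).

(* Main.v *)
Require Import Defs.
From Stdlib Require Import List Classical ProofIrrelevance.
Import ListNotations.

Section Aux.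
Variable E : Graph.

Lemma walk_app (u v w : vtx E) p q :
  walk E u p v -> walk E v q w -> walk E u (p ++ q) w.
Proof.
  revert u; induction p as [|e p IH]; simpl; intros u H1 H2.
  - subst; auto.
  - destruct H1; split; auto.
Qed.

Lemma walk_split (u v x : vtx E) p :
  walk E u p v -> In x (map (src E) p) -> reaches E u x /\ reaches E x v.
Proof.
  revert u; induction p as [|e p IH]; simpl; intros u H1 Hin.
  - destruct Hin.
  - destruct H1 as [Hs Hw]. destruct Hin as [Hx|Hin].
    + subst. split. exists []; simpl; auto. exists (e :: p); simpl; auto.
    + destruct (IH _ Hw Hin) as [[q Hq] Hr]. split; auto.
      exists (e :: q); simpl; auto.
Qed.

Lemma walk_rng (u v : vtx E) p g :
  walk E u p v -> In g p -> In (rng E g) (map (src E) p) \/ rng E g = v.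
Proof.
  revert u; induction p as [|e p IH]; simpl; intros u H1 Hin.
  - destruct Hin.
  - destruct H1 as [Hs Hw]. destruct Hin as [He|Hin].
    + subst. destruct p as [|e' p]; simpl in Hw.
      * right; auto.
      * left; right; left; destruct Hw; auto.
    + destruct (IH _ Hw Hin); auto.
Qed.

Lemma nodup_transfer (A B C : Type) (f : A -> B) (g : A -> C) (l : list A) :
  NoDup (map f l) -> (forall x y, g x = g y -> f x = f y) -> NoDup (map g l).
Proof.
  induction l as [|a l IH]; simpl; intros Hn Hfg; constructor.
  - inversion Hn; subst. intro Hin. apply in_map_iff in Hin.
    destruct Hin as [z [Hz Hzl]]. apply H1. apply in_map_iff.
    exists z; split; auto.
  - inversion Hn; auto.
Qed.
End Aux.
Arguments walk_app {E u v w p q} _ _.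
Arguments walk_split {E u v x p} _ _.
Arguments walk_rng {E u v p g} _ _.

Section Q.
Variable E : Graph.
Variables H S : vtx E -> Prop.
Variable hH : hereditary E H.

Definition qe (y : QE E H S) : edg E :=
  match proj1_sig y with inl e => e | inr e => e end.

Lemma src_q y : proj1_sig (q_src hH y) = inl (src E (qe y)).
Proof. destruct y as [[e|e] p]; reflexivity. Qed.

Lemma qv_eq (x y : QV E H S) : proj1_sig x = proj1_sig y -> x = y.
Proof.
  destruct x as [x px], y as [y py]; simpl; intros; subst; f_equal;
  apply proof_irrelevance.
Qed.

Lemma qsrc_eq x y : src E (qe x) = src E (qe y) -> q_src hH x = q_src hH y.
Proof. intros; apply qv_eq; rewrite !src_q; congruence. Qed.

Lemma qwalk (c : list (QE E H S)) : forall (u v : QV E H S) u0 v0,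
  walk (@quotient_graph E H S hH) u c v -> proj1_sig u = inl u0 -> proj1_sig v = inl v0 ->
  walk E u0 (map qe c) v0.
Proof.
  induction c as [|y c IH]; simpl; intros u v u0 v0 Hw Hu Hv.
  - subst. rewrite Hv in Hu. congruence.
  - destruct Hw as [Hs Hr].
    destruct y as [[e|e] p].
    + simpl in Hs. subst u. simpl in Hu. injection Hu; intros; subst.
      split; auto. eapply IH; eauto.
    + exfalso. destruct c as [|y2 c]; simpl in Hr.
      * subst v. simpl in Hv. discriminate.
      * destruct Hr as [Hr _]. apply (f_equal (@proj1_sig _ _)) in Hr.
        rewrite src_q in Hr. simpl in Hr. discriminate.
Qed.
End Q.
Arguments qe {E H S} y.
Arguments src_q {E H S} hH y.
Arguments qv_eq {E H S} x y _.
Arguments qsrc_eq {E H S} hH x y _.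
Arguments qwalk {E H S} hH c u v u0 v0 _ _ _.

Theorem proposition3p11 (E : Graph) (H S : vtx E -> Prop)
  (hL : condition_L E) (hadm : admissible E H S) (hrefl : reflexive_pair E H S) :
  condition_L (@quotient_graph E H S (proj1 hadm)).
Proof.
  set (hH := proj1 hadm).
  intros c' [y [p' [Hc [Hw Hnd]]]].
  set (c := map (@qe E H S) c').
  assert (HwE : walk E (src E (qe y)) c (src E (qe y))).
  { eapply qwalk; eauto; apply src_q. }
  assert (HndE : NoDup (map (src E) c)).
  { unfold c; rewrite map_map. eapply nodup_transfer; [exact Hnd|].
    intros; apply qsrc_eq; auto. }
  assert (Hcyc : is_cycle E c).
  { exists (qe y), (map qe p'). unfold c in *; rewrite Hc in *; simpl in *; split; auto. }
  destruct (classic (exists f, In (src E f) (map (src E) c) /\ ~ In f c /\ ~ H (rng E f)))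
    as [[f [Hf1 [Hf2 Hf3]]]|Hno].
  - exists (exist (qedge_pred E H S) (inl f) Hf3). split.
    + apply in_map_iff in Hf1. destruct Hf1 as [x [Hx Hxc]].
      unfold c in Hxc. apply in_map_iff in Hxc. destruct Hxc as [y' [Hy' Hy'c]].
      apply in_map_iff. exists y'. split; auto.
      apply qv_eq. change (proj1_sig (q_src hH y') = proj1_sig (q_src hH (exist (qedge_pred E H S) (inl f) Hf3))).
      rewrite !src_q. subst. cbn. congruence.
    + intro Hin. apply Hf2. unfold c. apply in_map_iff.
      exists (exist (qedge_pred E H S) (inl f) Hf3); split; auto.
  - exfalso.
    destruct (hL c Hcyc) as [f [Hf1 Hf2]].
    assert (HfH : H (rng E f)).
    { apply NNPP; intro; apply Hno; exists f; auto. }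
    set (s := src E (qe y)).
    assert (Hs : ~ H s).
    { pose proof (proj2_sig (q_src hH y)) as P.
      pose proof (src_q hH y) as Q. destruct (q_src hH y) as [x px].
      simpl in Q. subst x. exact px. }
    assert (HR : Rset E (Hperp E H) s).
    { apply NNPP; intro HnR. apply Hs. apply (proj1 hrefl). exact HnR. }
    destruct HR as [w [Hpw [q Hq]]].
    assert (Hinv : forall q x w, walk E x q w ->
              (H x \/ In x (map (src E) c)) -> (H w \/ In w (map (src E) c))).
    { induction q0 as [|g q0 IH]; simpl; intros x w0 Hq0 Px.
      - subst; auto.
      - destruct Hq0 as [Hg Hq0]. apply (IH _ _ Hq0).
        destruct Px as [Px|Px].
        + left. apply (hH x); auto. exists [g]; simpl; auto.
        + destruct (classic (In g c)) as [Hgc|Hgc].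
          * right. destruct (walk_rng HwE Hgc) as [?|Heq]; auto.
            rewrite Heq. unfold c; rewrite Hc; simpl; auto.
          * left. apply NNPP; intro. apply Hno. exists g. subst x. auto. }
    assert (Hsc : In s (map (src E) c)).
    { unfold c, s; rewrite Hc; simpl; auto. }
    destruct (Hinv q s w Hq (or_intror Hsc)) as [Hw'|Hw'].
    + apply Hpw. exists w; split; auto. exists []; simpl; auto.
    + apply Hpw. exists (rng E f); split; auto.
      destruct (walk_split HwE Hw') as [_ [q1 Hq1]].
      destruct (walk_split HwE Hf1) as [[q2 Hq2] _].
      exists (q1 ++ q2 ++ [f]). eapply walk_app; eauto.
      eapply walk_app; eauto. simpl; auto.
Qed.
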